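(* Let $f(X)=X^n+a_{n-1}X^{n-1}+\dots+a_1X+a_0\in K[X]$, $n\geq 1$, be a monic regular polynomial. For each value $m$ that is the valuation of some root of $f$ in $\overline{K}$, let $f_m(X)=\prod (X-\zeta)$, the product taken (with multiplicity) over the roots $\zeta\in\overline{K}$ of $f$ with $v(\zeta)=m$, so that $f=\prod_m f_m$. Then every factor $f_m$ is a regular polynomial.
   Context: $K$ is a field complete with respect to a non-archimedean discrete valuation $v$ with $v(\pi)=1$ for a uniformizer $\pi$ of the valuation ring $A=\{x\in K: v(x)\geq 0\}$; the residue field $\kappa=A/\pi A$ is finite with $q$ elements and characteristic $p$; $v$ also denotes the unique extension of the valuation to an algebraic closure $\overline{K}$. It is known that each $f_m$ has coefficients in $K$. For $h=\sum_{i=0}^d c_iX^i$ (coefficients in $K$), the Newton polygon of $h$ is the convex hull of the points $(i,v(c_i))$ with $c_i\neq 0$. An edge of a polygon in $\mathbb{R}^2$ is a lower edge if it has an inner normal vector with positive second coordinate. $h$ is called regular if for every lower edge $S$ of its Newton polygon, with vertices $(s,v(c_s))$ and $(s',v(c_{s'}))$, $s>s'$: (1) $S$ contains exactly two points of the set $\{(i,v(c_i)) : 0\leq i\leq d,\ c_i\neq 0\}$; (2) $p\nmid (s-s')$. *)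

(* Defs.v *)
From HB Require Import structures.
From mathcomp Require Import all_boot all_order all_algebra.
Set Implicit Arguments. Unset Strict Implicit. Unset Printing Implicit Defensive.
Import Order.TTheory GRing.Theory Num.Theory.
Local Open Scope ring_scope.

(* A (rank <= 1, rational-valued) valuation on a field L, specified on
   nonzero elements; the value of 0 is +oo by convention and v 0 is never used. *)
Definition is_valuation (L : fieldType) (v : L -> rat) : Prop :=
  (forall x y : L, x != 0 -> y != 0 -> v (x * y) = v x + v y) /\
  (forall x y : L, x != 0 -> y != 0 -> x + y != 0 ->
     Num.min (v x) (v y) <= v (x + y)).

Section Setting.
Variables (K : fieldType) (L : closedFieldType) (iota : {rmorphism K -> L})
          (v : L -> rat).

Definition vK (x : K) : rat := v (iota x).

Definition in_A (x : K) : bool := (x == 0) || (0 <= vK x).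

(* x = y modulo the maximal ideal pi A *)
Definition congr_mod_pi (x y : K) : bool := (x - y == 0) || (1 <= vK (x - y)).

Definition cauchy_seq (u : nat -> K) : Prop :=
  forall N : nat, exists M : nat, forall i j : nat, (M <= i)%N -> (M <= j)%N ->
    (u i - u j == 0) || (N%:R <= vK (u i - u j)).

Definition converges_to (u : nat -> K) (l : K) : Prop :=
  forall N : nat, exists M : nat, forall i : nat, (M <= i)%N ->
    (u i - l == 0) || (N%:R <= vK (u i - l)).

(* Standing assumptions: K complete w.r.t. a discrete valuation with
   v(pi) = 1, residue field A/piA finite with q elements and characteristic p;
   v is a valuation on the algebraically closed field L containing K
   (via iota) extending the valuation of K. *)
Definition standing_assumptions (pi : K) (p q : nat) : Prop :=
  [/\ is_valuation v,
      (forall x : K, x != 0 -> denq (vK x) = 1) /\ (pi != 0 /\ vK pi = 1),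
      (forall u : nat -> K, cauchy_seq u -> exists l : K, converges_to u l),
      (exists s : seq K, [/\ size s = q, all in_A s,
          (forall i j : nat, (i < q)%N -> (j < q)%N -> i != j ->
             ~~ congr_mod_pi (nth 0 s i) (nth 0 s j)) &
          (forall a : K, in_A a -> exists2 r, r \in s & congr_mod_pi a r)]) &
      (prime p /\ congr_mod_pi (p%:R) 0)].
End Setting.

Section Newton.
Variables (L : fieldType) (v : L -> rat).

(* (i, v h_i) lies on or above the line through (s', v h_s') and (s, v h_s) *)
Definition on_or_above (h : {poly L}) (s' s i : nat) : bool :=
  (s%:R - s'%:R) * v h`_i >=
    (s%:R - i%:R) * v h`_s' + (i%:R - s'%:R) * v h`_s :> rat.

Definition on_line (h : {poly L}) (s' s i : nat) : bool :=
  (s%:R - s'%:R) * v h`_i ==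
    (s%:R - i%:R) * v h`_s' + (i%:R - s'%:R) * v h`_s :> rat.

(* The segment from (s', v h_s') to (s, v h_s), s' < s, is a lower edge of the
   Newton polygon of h (convex hull of the points (i, v h_i), h_i != 0):
   all points lie on or above its line, and it is the full face cut out by
   that line (its endpoints are the extreme points on the line). *)
Definition lower_edge (h : {poly L}) (s' s : nat) : Prop :=
  [/\ (s' < s)%N, h`_s' != 0, h`_s != 0,
      (forall i, h`_i != 0 -> on_or_above h s' s i) &
      (forall i, h`_i != 0 -> on_line h s' s i -> (s' <= i <= s)%N)].

Definition regular (p : nat) (h : {poly L}) : Prop :=
  forall s' s, lower_edge h s' s ->
    (forall i, h`_i != 0 -> on_line h s' s i -> i = s' \/ i = s) /\
    ~~ (p %| s - s')%N.

(* valuation with value +oo (None) at 0 *)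
Definition vb (z : L) : option rat := if z == 0 then None else Some (v z).
End Newton.

(* Main.v *)
Require Import Defs.
From HB Require Import structures.
From mathcomp Require Import all_boot all_order all_algebra.
From mathcomp Require Import zify ring lra.
Set Implicit Arguments. Unset Strict Implicit.
Import Order.TTheory GRing.Theory Num.Theory.
Local Open Scope ring_scope.

Lemma v1 (L : fieldType) (v : L -> rat) : is_valuation v -> v 1 = 0.
Proof.
move=> [hM _]; have := hM 1 1 (oner_neq0 _) (oner_neq0 _); rewrite mulr1 => h.
lra.
Qed.

Lemma vN (L : fieldType) (v : L -> rat) : is_valuation v -> forall x, x != 0 -> v (- x) = v x.
Proof.
move=> hv x x0; have [hM _] := hv.
have n1 : (-1 : L) != 0 by rewrite oppr_eq0 oner_neq0.
have := hM (-1) (-1) n1 n1; rewrite mulrNN mulr1 (v1 hv) => h.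
have := hM (-1) x n1 x0; rewrite mulN1r => e. rewrite e. lra.
Qed.

Lemma vD_gt (L : fieldType) (v : L -> rat) : is_valuation v -> forall x y, x != 0 ->
  (y = 0 \/ v x < v y) -> x + y != 0 /\ v (x + y) = v x.
Proof.
move=> hv x y x0 [->|]; first by rewrite addr0.
have [hM hU] := hv => lt.
have [->|y0] := eqVneq y 0; first by rewrite addr0.
have xy0 : x + y != 0.
  apply/eqP=> e; have : y = - x by rewrite -(addKr x y) e addr0.
  move=> ey; move: lt; rewrite ey (vN hv x0); lra.
split => //.
have h1 := hU x y x0 y0 xy0.
have ny0 : - y != 0 by rewrite oppr_eq0.
have h2 := hU (x + y) (- y) xy0 ny0; rewrite addrK x0 (vN hv y0) in h2.
have := h2 isT.
move: h1; rewrite /Num.min; case: ifP => _; case: ifP => _; lra.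
Qed.

Lemma vM (L : fieldType) (v : L -> rat) : is_valuation v -> forall x y, x * y != 0 -> v (x * y) = v x + v y.
Proof.
move=> [hM _] x y; rewrite mulf_eq0 negb_or => /andP[] ; exact: hM.
Qed.

Lemma sum_gt (L : fieldType) (v : L -> rat) : is_valuation v -> forall (I : Type) (s : seq I) (P : pred I) (F : I -> L) c,
  (forall i, P i -> F i = 0 \/ c < v (F i)) ->
  (\sum_(i <- s | P i) F i = 0 \/ c < v (\sum_(i <- s | P i) F i)).
Proof.
move=> hv I s P F c h; apply: (big_ind (fun x => x = 0 \/ c < v x)) => //; first by left.
move=> x y [->|hx] [->|hy]; rewrite ?add0r ?addr0; try by [left|right].
have [x0|x0] := eqVneq x 0; first by rewrite x0 add0r; right.
have [y0|y0] := eqVneq y 0; first by rewrite y0 addr0; right.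
have [xy0|xy0] := eqVneq (x + y) 0; first by left.
right; have := (proj2 hv) x y x0 y0 xy0.
move: hx hy; rewrite /Num.min; case: ifP => _; lra.
Qed.

Lemma sum_ge (L : fieldType) (v : L -> rat) : is_valuation v -> forall (I : Type) (s : seq I) (P : pred I) (F : I -> L) c,
  (forall i, P i -> F i = 0 \/ c <= v (F i)) ->
  (\sum_(i <- s | P i) F i = 0 \/ c <= v (\sum_(i <- s | P i) F i)).
Proof.
move=> hv I s P F c h; apply: (big_ind (fun x => x = 0 \/ c <= v x)) => //; first by left.
move=> x y [->|hx] [->|hy]; rewrite ?add0r ?addr0; try by [left|right].
have [x0|x0] := eqVneq x 0; first by rewrite x0 add0r; right.
have [y0|y0] := eqVneq y 0; first by rewrite y0 addr0; right.
have [xy0|xy0] := eqVneq (x + y) 0; first by left.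
right; have := (proj2 hv) x y x0 y0 xy0.
move: hx hy; rewrite /Num.min; case: ifP => _; lra.
Qed.
Definition wt (L : fieldType) (v : L -> rat) (r : rat) (P : {poly L}) (i : nat) : rat :=
  v P`_i + i%:R * r.
Definition pge (L : fieldType) (v : L -> rat) (r : rat) (P : {poly L}) (W : rat) :=
  forall t, P`_t != 0 -> W <= wt v r P t.
Definition pexact (L : fieldType) (v : L -> rat) (r : rat) (P : {poly L}) (i : nat) (W : rat) :=
  [/\ P`_i != 0, wt v r P i = W & forall t, t != i -> P`_t != 0 -> W < wt v r P t].

Lemma term_v (L : fieldType) (v : L -> rat) r : is_valuation v -> forall (P Q : {poly L}) (k t : nat),
  (k <= t)%N -> P`_k * Q`_(t - k) != 0 ->
  [/\ P`_k != 0, Q`_(t - k) != 0 &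
  v (P`_k * Q`_(t - k)) = wt v r P k + wt v r Q (t - k) - t%:R * r].
Proof.
move=> hv P Q k t kt nz; move: (nz); rewrite mulf_eq0 negb_or => /andP[h1 h2].
split => //; rewrite (vM hv nz) /wt natrB // mulrBl; lra.
Qed.

Lemma pge_mul (L : fieldType) (v : L -> rat) r : is_valuation v -> forall (P Q : {poly L}) W1 W2,
  pge v r P W1 -> pge v r Q W2 -> pge v r (P * Q) (W1 + W2).
Proof.
move=> hv P Q W1 W2 hP hQ t nz.
have := sum_ge hv (index_enum 'I_t.+1) (P := xpredT) (F := fun k : 'I_t.+1 => P`_k * Q`_(t - k)) (c := W1 + W2 - t%:R * r).
rewrite /wt -coefM => h; case: h.
- move=> k _; have [->|nzk] := eqVneq (P`_k * Q`_(t - k)) 0; first by left.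
  right; have [h1 h2 ->] := term_v r hv (ltnSE (ltn_ord k)) nzk.
  have := hP _ h1; have := hQ _ h2; lra.
- by move=> e; move: nz; rewrite e eqxx.
- lra.
Qed.

Lemma pexact_pge (L : fieldType) (v : L -> rat) r (P : {poly L}) i W :
  pexact v r P i W -> pge v r P W.
Proof.
move=> [h1 h2 h3] t nz; have [->|ti] := eqVneq t i; first by rewrite h2.
exact/ltW/h3.
Qed.

Lemma pexact_mul (L : fieldType) (v : L -> rat) r : is_valuation v -> forall (P Q : {poly L}) i j W1 W2,
  pexact v r P i W1 -> pexact v r Q j W2 -> pexact v r (P * Q) (i + j) (W1 + W2).
Proof.
move=> hv P Q i j W1 W2 hP hQ.
have gP := pexact_pge hP; have gQ := pexact_pge hQ.
case: hP => [Pi0 Pie Pig]; case: hQ => [Qj0 Qje Qjg].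
have strict : forall t (k : 'I_t.+1), (k != i :> nat) || (t - k != j)%N ->
    P`_k * Q`_(t - k) = 0 \/ W1 + W2 - t%:R * r < v (P`_k * Q`_(t - k)).
  move=> t k hk; have [->|nzk] := eqVneq (P`_k * Q`_(t - k)) 0; first by left.
  right; have [h1 h2 ->] := term_v r hv (ltnSE (ltn_ord k)) nzk.
  have := gP _ h1; have := gQ _ h2.
  case/orP: hk => hk.
    have := Pig _ hk h1; lra.
  have := Qjg _ hk h2; lra.
have io : (i < (i + j).+1)%N by rewrite ltnS leq_addr.
have main : (P * Q)`_(i + j) != 0 /\ v (P * Q)`_(i + j) = W1 + W2 - (i + j)%:R * r.
  have nz : P`_i * Q`_(i + j - i) != 0 by rewrite addKn mulf_neq0.
  have [_ _ ev] := term_v r hv (leq_addr j i) nz.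
  rewrite coefM (bigD1 (Ordinal io)) //=.
  have [] := vD_gt hv (x := P`_i * Q`_(i + j - i))
     (y := \sum_(k < (i + j).+1 | k != Ordinal io) P`_k * Q`_(i + j - k)) nz.
    have := sum_gt hv (index_enum 'I_(i + j).+1) (P := fun k => k != Ordinal io)
       (F := fun k : 'I_(i + j).+1 => P`_k * Q`_(i + j - k)) (c := W1 + W2 - (i + j)%:R * r).
    case.
    - by move=> k hk; apply: strict; rewrite hk.
    - by left.
    - by move=> h; right; move: h; rewrite ev addKn Pie Qje.
  by move=> -> ->; rewrite ev addKn Pie Qje.
case: main => m1 m2.
split => //.
- by rewrite /wt m2; lra.
- move=> t tij nzt.
  have := sum_gt hv (index_enum 'I_t.+1) (P := xpredT)
       (F := fun k : 'I_t.+1 => P`_k * Q`_(t - k)) (c := W1 + W2 - t%:R * r).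
  rewrite -coefM; case.
  + move=> k _; apply: strict; rewrite -negb_and; apply/negP => /andP[/eqP ki /eqP tk].
    by move/eqP: tij; apply; rewrite -ki -tk subnKC // -ltnS.
  + by move=> e; move: nzt; rewrite e eqxx.
  + rewrite /wt; lra.
Qed.

Lemma coefXsubC (L : fieldType) (z : L) t :
  ('X - z%:P)`_t = (if t == 1%N then 1 else if t == 0%N then - z else 0).
Proof.
rewrite coefB coefX coefC; case: t => [|[|t]] //=; rewrite ?subr0 ?sub0r //.
Qed.

Lemma pexact_big (L : fieldType) (v : L -> rat) r : is_valuation v -> forall z : L,
  z = 0 \/ r < v z -> pexact v r ('X - z%:P) 1 r.
Proof.
move=> hv z hz; split.
- by rewrite coefXsubC eqxx oner_neq0.
- by rewrite /wt coefXsubC eqxx (v1 hv) add0r mul1r.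
- move=> t t1; rewrite /wt coefXsubC (negbTE t1).
  have [-> nz|t00] := eqVneq t 0%N; last by rewrite eqxx. rewrite mul0r addr0.
  have z0 : z != 0 by rewrite -oppr_eq0.
  rewrite (vN hv z0); case: hz => // e; by move: z0; rewrite e eqxx.
Qed.

Lemma pexact_small (L : fieldType) (v : L -> rat) r : is_valuation v -> forall z : L,
  z != 0 -> v z < r -> pexact v r ('X - z%:P) 0 (v z).
Proof.
move=> hv z z0 hz; split.
- by rewrite coefXsubC /= oppr_eq0.
- by rewrite /wt coefXsubC /= (vN hv z0) mul0r addr0.
- move=> t t0; rewrite /wt coefXsubC (negbTE t0).
  have [-> _|t1] := eqVneq t 1%N; last by rewrite /= eqxx. by rewrite (v1 hv) add0r mul1r.
Qed.

Lemma pge_eq (L : fieldType) (v : L -> rat) r : is_valuation v -> forall z : L,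
  z != 0 -> v z = r -> pge v r ('X - z%:P) r.
Proof.
move=> hv z z0 hz t; rewrite /wt coefXsubC.
have [-> _|t1] := eqVneq t 1%N; first by rewrite (v1 hv) add0r mul1r.
have [-> _|t0] := eqVneq t 0%N; last by rewrite /= eqxx.
by rewrite (vN hv z0) hz mul0r addr0.
Qed.

Lemma pexact_prod (L : fieldType) (v : L -> rat) r : is_valuation v -> forall s : seq L,
  (forall z, z \in s -> exists i W, pexact v r ('X - z%:P) i W) ->
  exists i W, pexact v r (\prod_(z <- s) ('X - z%:P)) i W.
Proof.
move=> hv; elim => [|z s IH] h.
  exists 0%N, 0; rewrite big_nil; split.
  - by rewrite coef1 oner_neq0.
  - by rewrite /wt coef1 (v1 hv) mul0r addr0.
  - by move=> t t0; rewrite coef1 (negbTE t0) eqxx.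
have [i [W hz]] := h z (mem_head _ _).
have [j [W' hs]] := IH (fun y ys => h y ltac:(by rewrite inE ys orbT)).
exists (i + j)%N, (W + W'); rewrite big_cons; exact: pexact_mul.
Qed.

Lemma pge_prod (L : fieldType) (v : L -> rat) r : is_valuation v -> forall s : seq L,
  (forall z, z \in s -> z != 0 /\ v z = r) ->
  [/\ pge v r (\prod_(z <- s) ('X - z%:P)) ((size s)%:R * r),
      (\prod_(z <- s) ('X - z%:P))`_0 != 0 &
      v (\prod_(z <- s) ('X - z%:P))`_0 = (size s)%:R * r].
Proof.
move=> hv; elim => [|z s IH] h.
  rewrite big_nil /= mul0r; split.
  - move=> t; rewrite /wt coef1; have [-> _|t0] := eqVneq t 0%N; last by rewrite /= eqxx. by rewrite (v1 hv) mul0r addr0.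
  - by rewrite coef1 oner_neq0.
  - by rewrite coef1 (v1 hv).
have [z0 vz] := h z (mem_head _ _).
have [g0 c0 vc0] := IH (fun y ys => h y ltac:(by rewrite inE ys orbT)).
rewrite big_cons /=.
have -> : (size s).+1%:R * r = r + (size s)%:R * r by rewrite -nat1r mulrDl mul1r.
split.
- by apply: pge_mul => //; apply: pge_eq.
- by rewrite coef0M mulf_neq0 // coefXsubC /= oppr_eq0.
- rewrite coef0M (vM hv); last by rewrite mulf_neq0 // coefXsubC /= oppr_eq0.
  by rewrite coefXsubC /= (vN hv z0) vz vc0 addrC.
Qed.



Lemma add_gt (L : fieldType) (v : L -> rat) : is_valuation v -> forall (x y : L) c,
  (x = 0 \/ c < v x) -> (y = 0 \/ c < v y) -> (x + y = 0 \/ c < v (x + y)).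
Proof.
move=> hv x y c [->|hx] [->|hy]; rewrite ?add0r ?addr0; try by [left|right].
have [x0|x0] := eqVneq x 0; first by rewrite x0 add0r; right.
have [y0|y0] := eqVneq y 0; first by rewrite y0 addr0; right.
have [xy0|xy0] := eqVneq (x + y) 0; first by left.
right; have := (proj2 hv) x y x0 y0 xy0.
move: hx hy; rewrite /Num.min; case: ifP => _; lra.
Qed.

Lemma coef_split (L : fieldType) (v : L -> rat) r : is_valuation v -> forall (G F : {poly L}) a Wg WF,
  pexact v r G a Wg -> pge v r F WF -> forall t, exists R,
  (G * F)`_t = (if (a <= t)%N then G`_a * F`_(t - a) else 0) + R /\
  (R = 0 \/ Wg + WF - t%:R * r < v R).
Proof.
move=> hv G F a Wg WF hG hF t.
have gG := pexact_pge hG; case: hG => [Ga0 Gae Gag].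
exists (\sum_(k < t.+1 | k != a :> nat) G`_k * F`_(t - k)); split.
- rewrite coefM; case: (leqP a t) => [at_|ta].
  + have io : (a < t.+1)%N by rewrite ltnS.
    rewrite (bigD1 (Ordinal io)) //=.
  + rewrite add0r; apply: eq_bigl => k; symmetry; apply/eqP => e.
    by move: (ltn_ord k); rewrite ltnS e leqNgt ta.
- have := sum_gt hv (index_enum 'I_t.+1) (P := fun k : 'I_t.+1 => k != a :> nat)
       (F := fun k : 'I_t.+1 => G`_k * F`_(t - k)) (c := Wg + WF - t%:R * r).
  apply => k hk; have [->|nzk] := eqVneq (G`_k * F`_(t - k)) 0; first by left.
  right; have [h1 h2 ->] := term_v r hv (ltnSE (ltn_ord k)) nzk.
  have := Gag _ hk h1; have := hF _ h2; lra.
Qed.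

Lemma line_lemma (L : fieldType) (v : L -> rat) r (h : {poly L}) s' s W :
  (s' < s)%N -> wt v r h s' = W -> wt v r h s = W -> forall i,
  (on_or_above v h s' s i = (W <= wt v r h i)) /\ (on_line v h s' s i = (wt v r h i == W)).
Proof.
move=> ss e1 e2 i.
have e : (s%:R - i%:R) * v h`_s' + (i%:R - s'%:R) * v h`_s = (s%:R - s'%:R) * (W - i%:R * r) :> rat.
  have -> : v h`_s' = W - s'%:R * r by rewrite -e1 /wt addrK.
  have -> : v h`_s = W - s%:R * r by rewrite -e2 /wt addrK.
  ring.
have pos : 0 < s%:R - s'%:R :> rat by rewrite subr_gt0 ltr_nat.
rewrite /on_or_above /on_line e ler_pM2l // /wt; split.
- by apply/idP/idP => H; lra.
- apply/eqP/eqP => H.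
  + have := mulfI (lt0r_neq0 pos) H; lra.
  + by rewrite -H addrK.
Qed.

Lemma geom (S S' D r WF ws ws' : rat) : 0 <= S' -> S' < S -> S <= D -> 0 < D ->
  WF <= ws -> WF <= ws' ->
  S * (ws' - S' * r) + (0 - S') * (ws - S * r) <= (S - S') * WF ->
  (S - D) * (ws' - S' * r) + (D - S') * (ws - S * r) <= (S - S') * (WF - D * r) ->
  ws' = WF /\ ws = WF.
Proof.
move=> h0 h1 h2 h3 h4 h5 h6 h7.
set u' := ws' - WF; set u := ws - WF.
have i1 : S * u' - S' * u <= 0.
  have -> : S * u' - S' * u = S * (ws' - S' * r) + (0 - S') * (ws - S * r) - (S - S') * WF
    by rewrite /u /u'; ring.
  lra.
have i2 : (S - D) * u' + (D - S') * u <= 0.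
  have -> : (S - D) * u' + (D - S') * u =
      (S - D) * (ws' - S' * r) + (D - S') * (ws - S * r) - (S - S') * (WF - D * r)
    by rewrite /u /u'; ring.
  lra.
have u0 : 0 <= u by rewrite /u subr_ge0.
have u'0 : 0 <= u' by rewrite /u' subr_ge0.
have k : D * (S - S') * u <= 0.
  have e : D * (S - S') * u = S * ((S - D) * u' + (D - S') * u) + (D - S) * (S * u' - S' * u)
    by ring.
  have a1 : S * ((S - D) * u' + (D - S') * u) <= 0 by apply: mulr_ge0_le0 => //; lra.
  have a2 : (D - S) * (S * u' - S' * u) <= 0 by apply: mulr_ge0_le0 => //; lra.
  rewrite e; lra.
have uz : u = 0.
  apply/eqP; rewrite eq_le u0 andbT.
  by move: k; rewrite pmulr_rle0 // mulr_gt0 // subr_gt0.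
have u'z : u' = 0.
  move: i1; rewrite uz mulr0 subr0 => i1.
  apply/eqP; rewrite eq_le u'0 andbT.
  by move: i1; rewrite pmulr_rle0 //; lra.
by split; [move: u'z; rewrite /u' | move: uz; rewrite /u]; move/eqP; rewrite subr_eq0 => /eqP.
Qed.

Theorem theorem2p4 (K : fieldType) (L : closedFieldType)
  (iota : {rmorphism K -> L}) (v : L -> rat) (pi : K) (p q : nat) :
  standing_assumptions iota v pi p q ->
  forall f : {poly K}, f \is monic -> (1 < size f)%N ->
  regular v p (map_poly iota f) ->
  forall rs : seq L, map_poly iota f = \prod_(z <- rs) ('X - z%:P) ->
  forall m : option rat, (exists2 z, z \in rs & vb v z = m) ->
  regular v p (\prod_(z <- rs | vb v z == m) ('X - z%:P)).
Proof.
move=> hst f fmon fsz freg rs hrs m [z0 z0in z0m].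
have hv : is_valuation v by case: hst.
case: m z0m => [r|] z0m; last first.
  have -> : \prod_(z <- rs | vb v z == None) ('X - z%:P) =
       'X^(size [seq z <- rs | vb v z == None]).
    rewrite -big_filter.
    have : all (fun z => z == 0) [seq z <- rs | vb v z == None].
      apply/allP => z; rewrite mem_filter /vb => /andP[]; by case: (z == 0).
    elim: [seq _ <- _ | _] => [|z s IH]; first by rewrite big_nil expr0.
    by move=> /= /andP[/eqP -> hs]; rewrite big_cons subr0 IH // exprS.
  move=> s' s [ss h1 h2 _ _]; exfalso.
  move: h1 h2; rewrite !coefXn.
  case: (eqVneq s' (size [seq z <- rs | vb v z == None])) => [e1|]; last by rewrite eqxx.
  case: (eqVneq s (size [seq z <- rs | vb v z == None])) => [e|]; last by rewrite eqxx.
  by move: ss; rewrite e e1 ltnn.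
set P := fun z => vb v z == Some r.
have PE : forall z, P z = (z != 0) && (v z == r).
  move=> z; rewrite /P /vb; case: (z == 0) => //=.
have Pz0 : P z0 by rewrite /P z0m.
set fs := [seq z <- rs | P z]; set gs := [seq z <- rs | ~~ P z].
have -> : \prod_(z <- rs | vb v z == Some r) ('X - z%:P) = \prod_(z <- fs) ('X - z%:P)
  by rewrite big_filter.
have hK : map_poly iota f = \prod_(z <- gs) ('X - z%:P) * \prod_(z <- fs) ('X - z%:P).
  by rewrite hrs (bigID P) /= mulrC !big_filter.
rewrite hK in freg.
set F := \prod_(z <- fs) ('X - z%:P) in freg *.
set G := \prod_(z <- gs) ('X - z%:P) in freg *.
set d := size fs.
have [Fge F00 vF0] : [/\ pge v r F (d%:R * r), F`_0 != 0 & v F`_0 = d%:R * r].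
  apply: pge_prod => // z; rewrite mem_filter PE => /andP[/andP[-> /eqP ->] _] //.
have [a [Wg hG]] : exists a Wg, pexact v r G a Wg.
  apply: pexact_prod => // z; rewrite mem_filter PE negb_and negbK => /andP[hz _].
  have [->|z0'] := eqVneq z 0; first by exists 1%N, r; apply: pexact_big => //; left.
  move: hz; rewrite /= => hz.
  case: (ltrgtP (v z) r) => [lt|gt|eqr].
  - by exists 0%N, (v z); apply: pexact_small.
  - by exists 1%N, r; apply: pexact_big => //; right.
  - by move: hz; rewrite eqr eqxx (negbTE z0').
set WF := d%:R * r; set W := Wg + WF.
have dpos : (0 < d)%N.
  rewrite lt0n size_eq0; apply/eqP => e.
  have : z0 \in fs by rewrite mem_filter Pz0 z0in.
  by rewrite e.
have sizeF : size F = d.+1 by rewrite size_prod_XsubC.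
have Fd : F`_d = 1.
  have mF : F \is monic by apply: monic_prod_XsubC.
  by move/monicP: mF; rewrite lead_coefE sizeF.
have wF0 : wt v r F 0 = WF by rewrite /wt vF0 mul0r addr0.
have wFd : wt v r F d = WF by rewrite /wt Fd (v1 hv) add0r.
have c1 : pge v r (G * F) W := pge_mul hv (pexact_pge hG) Fge.
have c2 : forall k, F`_k != 0 -> wt v r F k = WF ->
    (G * F)`_(a + k) != 0 /\ wt v r (G * F) (a + k) = W.
  move=> k Fk wk.
  have [R [eR hR]] := coef_split hv hG Fge (a + k).
  rewrite leq_addr in eR.
  case: (hG) => [Ga0 Gae _].
  have nz : G`_a * F`_(a + k - a) != 0 by rewrite addKn mulf_neq0.
  have [_ _ ev] := term_v r hv (leq_addr k a) nz.
  have [] := vD_gt hv nz (y := R).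
    by case: hR; [left | rewrite ev Gae addKn wk; right].
  rewrite -eR => nz2 e2; split => //.
  by rewrite /wt e2 ev Gae addKn wk /W natrD; lra.
have c3 : forall t, (G * F)`_t != 0 -> wt v r (G * F) t = W ->
    [/\ (a <= t)%N, F`_(t - a) != 0 & wt v r F (t - a) = WF].
  move=> t nzt wt_t.
  have vt : v (G * F)`_t = W - t%:R * r by rewrite -wt_t /wt addrK.
  have contra : forall x, (G * F)`_t = x -> x = 0 \/ W - t%:R * r < v x -> False.
    by move=> x <- [e|h]; [move: nzt; rewrite e eqxx | move: h; rewrite vt ltxx].
  have [R [eR hR]] := coef_split hv hG Fge t.
  case: (hG) => [Ga0 Gae _].
  case: (leqP a t) => [at_|ta]; last first.
    by exfalso; move: eR; rewrite leqNgt ta add0r => /contra; apply.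
  rewrite at_ in eR.
  have [zm|nzm] := eqVneq (G`_a * F`_(t - a)) 0.
    by exfalso; move: eR; rewrite zm add0r => /contra; apply.
  have [h1 h2 ev] := term_v r hv at_ nzm.
  have := Fge _ h2; rewrite le_eqVlt => /orP[/eqP e|lt].
    by split.
  exfalso; apply: (contra _ eR); apply: add_gt => //; right.
  rewrite ev Gae /W /WF; lra.
have e0 : (G * F)`_(a + 0) != 0 /\ wt v r (G * F) (a + 0) = W by apply: c2.
have ed : (G * F)`_(a + d) != 0 /\ wt v r (G * F) (a + d) = W by apply: c2 => //; rewrite Fd oner_neq0.
rewrite addn0 in e0.
have aad : (a < a + d)%N by rewrite -{1}[a]addn0 ltn_add2l.
have lineK := line_lemma aad e0.2 ed.2.
have Le : lower_edge v (G * F) a (a + d).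
  split => //.
  - exact: e0.1.
  - exact: ed.1.
  - by move=> i nz; rewrite (lineK i).1; apply: c1.
  - move=> i nz; rewrite (lineK i).2 => /eqP e.
    have [h1 h2 _] := c3 i nz e.
    have : (i - a < d.+1)%N.
      by rewrite ltnNge; apply/negP => hh; move: h2; rewrite nth_default ?eqxx // sizeF.
    rewrite h1 /=; lia.
have [R1 R2] := freg a (a + d) Le.
rewrite addKn in R2.
move=> s' s [ss Fs'0 Fs0 above full].
have sd : (s <= d)%N.
  by rewrite leqNgt; apply/negP => ds; move: Fs0; rewrite nth_default ?eqxx // sizeF.
have ab0 := above 0%N F00.
have abd := above d ltac:(by rewrite Fd oner_neq0).
have es' : v F`_s' = wt v r F s' - s'%:R * r by rewrite /wt addrK.
have es : v F`_s = wt v r F s - s%:R * r by rewrite /wt addrK.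
move: ab0 abd; rewrite /on_or_above es' es vF0 Fd (v1 hv) => ab0 abd.
have ges' := Fge _ Fs'0; have ges := Fge _ Fs0.
have [ws'e wse] : wt v r F s' = WF /\ wt v r F s = WF.
  apply: (geom (S := s%:R) (S' := s'%:R) (D := d%:R) (r := r)) => //.
  - by rewrite ltr_nat.
  - by rewrite ler_nat.
  - by rewrite ltr0n.
  - by move: ab0; rewrite /WF subr0.
  - by move: abd; rewrite /WF subrr mulr0.
have lineF := line_lemma ss ws'e wse.
have s'0 : s' = 0%N.
  have := full 0%N F00; rewrite (lineF 0%N).2 wF0 eqxx => /(_ isT) /andP[h _].
  by apply/eqP; rewrite -leqn0.
have sdd : s = d.
  have := full d ltac:(by rewrite Fd oner_neq0); rewrite (lineF d).2 wFd eqxx => /(_ isT) /andP[_ h].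
  by apply/eqP; rewrite eqn_leq sd h.
split; last by rewrite s'0 sdd subn0.
move=> i nz; rewrite (lineF i).2 => /eqP e.
have [h1 h2] := c2 i nz e.
have := R1 (a + i)%N h1; rewrite (lineK (a + i)%N).2 h2 eqxx => /(_ isT).
rewrite s'0 sdd; case=> H.
  by left; apply: (@addnI a); rewrite addn0.
by right; apply: (@addnI a).
Qed.
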